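(* Let $X$ be a compact metric space, $G:X\to\mathcal{K}(X)$ a measurable set-valued map, $f\in C(X,\mathbb{R})$ and $\mathcal{U}$ a finite open cover of $X$. Then $$F:x\mapsto\inf\Big\{\sum_{V\in\mathcal{V}}\sup_{y\in V\cap G(x)}f(y):\ \mathcal{V}\in\mathcal{C}_X,\ \mathcal{V}\succeq\mathcal{U}\Big\}$$ is a Borel measurable map.
   Context: $\mathcal{K}(X)$ is the family of nonempty closed subsets of $X$ with the Hausdorff metric; $G$ is measurable if $\{x: G(x)\cap V\neq\emptyset\}$ is Borel for every closed (equivalently, open) $V\subseteq X$. $\mathcal{C}_X$ is the set of finite covers of $X$ by Borel sets; $\mathcal{V}\succeq\mathcal{U}$ means each element of $\mathcal{V}$ lies in some element of $\mathcal{U}$. Terms with $V\cap G(x)=\emptyset$ are omitted. *)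

(* Defs.v *)
From HB Require Import structures.
From mathcomp Require Import all_boot all_order all_algebra.
From mathcomp Require Import all_classical all_reals all_analysis.
From mathcomp Require Import measurable_realfun.
Set Implicit Arguments. Unset Strict Implicit. Unset Printing Implicit Defensive.
Import Order.TTheory GRing.Theory Num.Theory.
Import numFieldNormedType.Exports.
Local Open Scope classical_set_scope.
Local Open Scope ring_scope.

Definition Borel (X : topologicalType) (A : set X) : Prop :=
  <<s @open X >> A.

Definition measurable_setmap (X : topologicalType) (G : X -> set X) : Prop :=
  forall V : set X, closed V -> Borel [set x | G x `&` V !=set0].

Definition borel_finite_cover (X : topologicalType) (Vs : set (set X)) : Prop :=
  finite_set Vs /\ (forall V, Vs V -> Borel V) /\ \bigcup_(V in Vs) V = setT.

Definition refines (X : Type) (Vs Us : set (set X)) : Prop :=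
  forall V, Vs V -> exists2 U, Us U & V `<=` U.

(* The term sup_{y in V ∩ G x} f y, omitted (i.e. 0) when V ∩ G x is empty. *)
Definition sup_term (R : realType) (X : Type) (f : X -> R) (GX V : set X)
  : \bar R :=
  if pselect (V `&` GX !=set0) is left _
  then ereal_sup [set (f y)%:E | y in V `&` GX] else 0%E.

Definition Fmap (R : realType) (X : topologicalType) (G : X -> set X)
  (f : X -> R) (Us : set (set X)) (x : X) : \bar R :=
  ereal_inf [set (\sum_(V \in Vs) sup_term f (G x) V)%E
            | Vs in [set Vs | borel_finite_cover Vs /\ refines Vs Us]].

(* Main.v *)
Require Import Defs.
From HB Require Import structures.
From mathcomp Require Import all_boot all_order all_algebra.
From mathcomp Require Import all_classical all_reals all_analysis.
From mathcomp Require Import measurable_realfun.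
From mathcomp Require Import lra.
Import Order.TTheory GRing.Theory Num.Theory.
Import numFieldNormedType.Exports.
Local Open Scope classical_set_scope.
Local Open Scope ring_scope.
Section Generic.
Context {T : topologicalType}.

Lemma Borel0 : Borel (@set0 T).
Proof. exact: sigma_algebra0. Qed.

Lemma BorelC (A : set T) : Borel A -> Borel (~` A).
Proof. by move=> hA; rewrite -setTD; exact: sigma_algebraCD. Qed.

Lemma BorelT : Borel (@setT T).
Proof. by rewrite -setC0; apply: BorelC; exact: Borel0. Qed.

Lemma Borel_bigcup (A : (set T)^nat) : (forall n, Borel (A n)) -> Borel (\bigcup_n A n).
Proof. exact: sigma_algebra_bigcup. Qed.

Lemma BorelU (A B : set T) : Borel A -> Borel B -> Borel (A `|` B).
Proof.
move=> hA hB; rewrite -bigcup2E; apply: Borel_bigcup => -[|[|n]]//=.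
exact: Borel0.
Qed.

Lemma BorelI (A B : set T) : Borel A -> Borel B -> Borel (A `&` B).
Proof.
move=> hA hB; rewrite -[A `&` B]setCK setCI; apply: BorelC.
by apply: BorelU; apply: BorelC.
Qed.

Lemma Borel_open (A : set T) : open A -> Borel A.
Proof. by move=> oA; apply: sub_sigma_algebra. Qed.

Lemma Borel_closed (A : set T) : closed A -> Borel A.
Proof.
by move=> cA; rewrite -[A]setCK; apply: BorelC; apply: Borel_open; exact: closed_openC.
Qed.

Lemma Borel_bigcup_count (I : countType) (E : I -> set T) :
  (forall i, Borel (E i)) -> Borel (\bigcup_i E i).
Proof.
move=> hE.
have -> : \bigcup_i E i = \bigcup_n (match (@unpickle I n) with Some i => E i | None => set0 end).
  apply/seteqP; split=> z.
    by move=> [i _ Ez]; exists (pickle i) => //; rewrite pickleK.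
  by move=> [n _]; case: (unpickle n) => // i Ez; exists i.
by apply: Borel_bigcup => n; case: (unpickle n) => // i; exact: Borel0.
Qed.

Lemma Borel_all (A : eqType) (l : seq A) (P : A -> set T) :
  (forall a, a \in l -> Borel (P a)) ->
  Borel [set x | forall a, a \in l -> P a x].
Proof.
elim: l => [_|a l IH hl].
  by rewrite (_ : [set x | _] = setT); [exact: BorelT | apply/seteqP; split].
have -> : [set x | forall b, b \in a :: l -> P b x] =
  P a `&` [set x | forall b, b \in l -> P b x].
  apply/seteqP; split=> z.
    by move=> H; split => [|b bl]; apply: H; rewrite inE ?eqxx ?bl ?orbT.
  by move=> [Pa H] b; rewrite inE => /orP[/eqP->//|]; exact: H.
apply: BorelI; first by apply: hl; rewrite inE eqxx.
by apply: IH => b bl; apply: hl; rewrite inE bl orbT.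
Qed.

End Generic.
Section RealHelp.
Context {R : realType}.

Lemma rat_between (a b : R) : a < b -> exists q : rat, a < ratr q < b.
Proof.
move=> ab.
have ne : [set z : R | a < z < b] !=set0.
  by exists ((a + b) / 2); rewrite /= !midf_lt.
have op : open [set z : R | a < z < b].
  have -> : [set z : R | a < z < b] = [set z | a < z] `&` [set z | z < b].
    by apply/seteqP; split=> z /=; [move=> /andP[-> ->] | move=> [-> ->]].
  by apply: openI; [exact: open_gt | exact: open_lt].
have [z [/= zab [q _ qz]]] := @dense_rat R _ ne op.
by exists q; rewrite qz.
Qed.

Lemma nat_inv_lt (e : R) : 0 < e -> exists n : nat, n.+1%:R^-1 < e.
Proof.
move=> e0; have := near_infty_natSinv_lt (PosNum e0).
by move=> /filter_ex [n Hn]; exists n.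
Qed.

Lemma small_all (A : eqType) (l : seq A) (P : A -> R -> Prop) :
  (forall a, a \in l -> exists2 e, 0 < e & forall e', 0 < e' <= e -> P a e') ->
  exists2 e, 0 < e & forall e', 0 < e' <= e -> forall a, a \in l -> P a e'.
Proof.
elim: l => [_|a l IH hl]; first by exists 1 => //.
have [e1 e10 H1] := hl a (mem_head _ _).
have [e2 e20 H2] : exists2 e, 0 < e & forall e', 0 < e' <= e -> forall b, b \in l -> P b e'.
  by apply: IH => b bl; apply: hl; rewrite inE bl orbT.
exists (Num.min e1 e2); first by rewrite lt_min e10 e20.
move=> e' /andP[e'0 e'le] b; rewrite inE => /orP[/eqP->|bl].
  by apply: H1; rewrite e'0 (le_trans e'le) // ge_min lexx.
by apply: H2 => //; rewrite e'0 (le_trans e'le) // ge_min lexx orbT.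
Qed.

Lemma sum_undup_le {A : eqType} (s : seq A) (g : A -> R) :
  (forall a, 0 <= g a) -> \sum_(a <- undup s) g a <= \sum_(a <- s) g a.
Proof.
move=> g0; elim: s => [|a s IH] /=; first by rewrite !big_nil.
case: ifP => _; rewrite !big_cons.
  by apply: (le_trans IH); rewrite lerDr.
by rewrite lerD2l.
Qed.

Lemma sum_filter_le {A : Type} (s : seq A) (P : pred A) (g : A -> R) :
  (forall a, 0 <= g a) -> \sum_(a <- s | P a) g a <= \sum_(a <- s) g a.
Proof.
move=> g0; rewrite big_mkcond /=; apply: ler_sum => a _.
by case: ifP.
Qed.

End RealHelp.
Definition pX {T : topologicalType} (x0 : T) : Type := T.
HB.instance Definition _ (T : topologicalType) (x0 : T) := Topological.on (pX x0).
HB.instance Definition _ (T : topologicalType) (x0 : T) := isPointed.Build (pX x0) x0.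
Lemma cc (T : topologicalType) (x0 : T) (A : set T) : compact A -> cover_compact A.
Proof.
move=> cA; have : @compact (pX x0) A by exact: cA.
by rewrite compact_cover.
Qed.
Section ErealPlumb.
Variables (R : realType) (T : topologicalType).

Lemma Borel_ereal (F : T -> \bar R) :
  (forall t : R, Borel [set x | (F x < t%:E)%E]) ->
  forall B : set (\bar R), measurable B -> Borel (F @^-1` B).
Proof.
move=> hF B mB.
pose P := [set A : set (\bar R) | Borel (F @^-1` A)].
have sP : sigma_algebra setT P.
  split.
  - by rewrite /P /= preimage_set0; exact: Borel0.
  - move=> A PA; rewrite /P /= setTD -preimage_setC; exact: BorelC.
  - by move=> A PA; rewrite /P /= preimage_bigcup; exact: Borel_bigcup.
have GP : @ErealGenInftyO.G R `<=` P.
  move=> _ [r ->]; rewrite /P /=.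
  have -> : F @^-1` `]-oo, r%:E[%classic = [set x | (F x < r%:E)%E].
    by apply/seteqP; split=> z /=; rewrite in_itv /=.
  exact: hF.
have : <<s @ErealGenInftyO.G R >> B.
  by move: mB; rewrite /measurable /= (@ErealGenInftyO.measurableE R).
by move/(smallest_sub sP GP).
Qed.

End ErealPlumb.
Section Metric.
Context {R : realType} {X : pseudoMetricType R}.

Lemma open_Fsigma (O : set X) : open O ->
  exists C : nat -> set X, (forall n, closed (C n)) /\ O = \bigcup_n C n.
Proof.
move=> oO.
exists (fun n => closure [set y | ball y (2 * n.+1%:R^-1) `<=` O]).
split; first by move=> n; exact: closed_closure.
apply/seteqP; split=> z.
- move=> Oz; have : nbhs z O by apply: open_nbhs_nbhs; split.
  move=> /nbhs_ballP [e /= e0 sub].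
  have e20 : 0 < e / 2 by rewrite divr_gt0.
  have [n hn] := @nat_inv_lt R (e / 2) e20.
  exists n => //; apply: subset_closure => /=.
  apply: subset_trans sub; apply: le_ball.
  by rewrite -ler_pdivlMl // mulrC ltW.
- move=> [n _ cz].
  have d0 : 0 < n.+1%:R^-1 :> R by rewrite invr_gt0 ltr0Sn.
  have [y [Ay bzy]] := cz (ball z n.+1%:R^-1) (nbhsx_ballx z _ d0).
  apply: Ay; apply: (le_ball _ (ball_sym bzy)).
  by rewrite ler_peMl // ?invr_ge0 // ler1n.
Qed.

Lemma hit_Borel (G : X -> set X) (Gmeas : measurable_setmap G) (O C : set X) :
  open O -> closed C -> Borel [set x | G x `&` (O `&` C) !=set0].
Proof.
move=> oO cC; have [Cn [cCn ->]] := open_Fsigma _ oO.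
have -> : [set x | G x `&` (\bigcup_n Cn n `&` C) !=set0] =
  \bigcup_n [set x | G x `&` (Cn n `&` C) !=set0].
  apply/seteqP; split=> x /=.
    by move=> [z [Gz [[n _ Cz] Cz']]]; exists n => //; exists z.
  by move=> [n _ [z [Gz [Cz Cz']]]]; exists z; split => //; split => //; exists n.
apply: Borel_bigcup => n; apply: Gmeas; exact: closedI.
Qed.

Lemma nets_exist (x0 : X) (Xc : compact [set: X]) (r : R) : 0 < r ->
  exists s : seq X, forall z, exists2 c, c \in s & ball c r z.
Proof.
move=> r0; have {}Xc := @cc X x0 _ Xc.
have := Xc X setT (fun c => interior (ball c r)).
case.
- by move=> c _; exact: open_interior.
- by move=> z _; exists z => //; exact: nbhsx_ballx.
move=> D' _ cov; exists (finmap.enum_fset D') => z.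
have [c cD' cz] := cov z I.
by exists c => //; exact: interior_subset.
Qed.

End Metric.
Lemma cont_bounded (R : realType) (X : topologicalType) (f : X -> R) :
  continuous f -> compact [set: X] -> exists M : R, forall z, f z <= M.
Proof.
move=> fc Xc.
have cf : compact (f @` [set: X]).
  by apply: continuous_compact => //; apply: continuous_subspaceT.
have := compact_bounded cf.
rewrite /= /bounded_near => H.
have [M HM] := filter_ex H.
exists M => z; apply: (le_trans (ler_norm _)); apply: HM; by exists z.
Qed.
Section Main.
Variables (R : realType) (X : pseudoMetricType R).
Hypotheses (Xhaus : hausdorff_space X) (Xcompact : compact [set: X]).
Variable G : X -> set X.
Hypotheses (Gclosed : forall x, closed (G x)) (Gmeas : measurable_setmap G).
Variable f : X -> R.
Hypothesis fcont : continuous f.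
Variable Us : set (set X).
Hypotheses (Usopen : forall U, Us U -> open U) (Uscover : \bigcup_(U in Us) U = setT).
Variable us : seq (set X).
Hypothesis usE : Us = [set` us].
Variable x0 : X.
Variable net : nat -> seq X.
Hypothesis netP : forall n z, exists2 c, c \in net n & ball c (n.+1%:R^-1 / 2) z.
Variable M : R.
Hypothesis fM : forall z, f z <= M.

Definition term (V : set X) (x : X) : \bar R := sup_term f (G x) V.
Definition termR V x : R := fine (term V x).

Lemma term_fin V x : term V x = (termR V x)%:E.
Proof.
rewrite /termR fineK // /term /sup_term; case: pselect => // -[y [Vy Gy]].
rewrite fin_numElt; apply/andP; split.
  by apply: (@lt_le_trans _ _ (f y)%:E); [exact: ltNyr | apply: ereal_sup_ubound; exists y].
apply: (@le_lt_trans _ _ M%:E); last exact: ltry.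
by apply: ge_ereal_sup => _ [z _ <-]; rewrite lee_fin.
Qed.

Lemma term_ge V x y : V y -> G x y -> f y <= termR V x.
Proof.
move=> Vy Gy; rewrite -lee_fin -term_fin /term /sup_term.
case: pselect => [_|/(_ (ex_intro _ y (conj Vy Gy)))//].
by apply: ereal_sup_ubound; exists y.
Qed.

Lemma term_le V x c : (forall y, V y -> G x y -> f y <= c) ->
  (V `&` G x = set0 -> 0 <= c) -> termR V x <= c.
Proof.
move=> h0 h1; rewrite -lee_fin -term_fin /term /sup_term.
case: pselect => [_|ne].
  by apply: ge_ereal_sup => _ [z [Vz Gz] <-]; rewrite lee_fin; exact: h0.
rewrite lee_fin; apply: h1; apply/seteqP; split => // z Hz; apply: ne; by exists z.
Qed.

Lemma term_empty V x : V `&` G x = set0 -> termR V x = 0.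
Proof. by move=> e; rewrite /termR /term /sup_term; case: pselect => //; rewrite e => -[]. Qed.

Lemma termN0 V x : termR V x < 0 -> exists y, V y /\ G x y.
Proof.
move=> h; apply: contrapT => ne.
suff : termR V x = 0 by move=> e; rewrite e ltxx in h.
apply: term_empty; apply/seteqP; split => // z [Vz Gz]; apply: ne; by exists z.
Qed.

Definition basic (p : nat * nat) : set X :=
  interior (ball (nth x0 (net p.1) p.2) (p.1.+1%:R^-1)).

Lemma basic_open p : open (basic p).
Proof. exact: open_interior. Qed.

Lemma basic_small q e : 0 < e -> exists p, basic p q /\ basic p `<=` ball q e.
Proof.
move=> e0; have e20 : 0 < e / 2 by rewrite divr_gt0.
have [n hn] := @nat_inv_lt R _ e20.
have d0 : 0 < n.+1%:R^-1 :> R by rewrite invr_gt0 ltr0Sn.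
have [c cn bcq] := netP n q.
exists (n, index c (net n)); rewrite /basic /= nth_index //.
move: hn bcq d0; move: (n.+1%:R^-1) => d hn bcq d0; split.
  rewrite /interior /=; apply/nbhs_ballP; exists (d / 2); first by rewrite /= divr_gt0.
  move=> z bqz; have := ball_triangle bcq bqz; by rewrite -splitr.
move=> z /interior_subset bcz.
have bqc : ball q d c by apply: ball_sym; apply: (le_ball _ bcq); lra.
have := ball_triangle bqc bcz; apply: le_ball.
lra.
Qed.

Definition Wset (ws : seq (nat * nat)) : set X :=
  [set z | exists2 p, p \in ws & basic p z].

Lemma Wset_open ws : open (Wset ws).
Proof.
have -> : Wset ws = \bigcup_(p in [set p | p \in ws]) basic p.
  by apply/seteqP; split => z [p pw bz]; exists p.
by apply: bigcup_open => p _; exact: basic_open.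
Qed.

Lemma nbhs_small (O : set X) q : open O -> O q ->
  exists2 e, 0 < e & forall e', 0 < e' <= e -> ball q e' `<=` O.
Proof.
move=> oO Oq; have : nbhs q O by apply: open_nbhs_nbhs; split.
move=> /nbhs_ballP [e /= e0 sub]; exists e => // e' /andP[_ e'e].
exact: subset_trans (le_ball e'e) sub.
Qed.

Lemma small_and (P1 P2 : R -> Prop) :
  (exists2 e, 0 < e & forall e', 0 < e' <= e -> P1 e') ->
  (exists2 e, 0 < e & forall e', 0 < e' <= e -> P2 e') ->
  exists2 e, 0 < e & forall e', 0 < e' <= e -> P1 e' /\ P2 e'.
Proof.
move=> [e1 e10 h1] [e2 e20 h2]; exists (Num.min e1 e2); first by rewrite lt_min e10 e20.
move=> e' /andP[e'0 e'le]; split.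
  by apply: h1; rewrite e'0 (le_trans e'le) // ge_min lexx.
by apply: h2; rewrite e'0 (le_trans e'le) // ge_min lexx orbT.
Qed.


Definition rr (q : rat) : R := ratr q.

Definition data := (seq (seq (nat * nat) * rat) * seq (nat * rat))%type.

Definition PosCov (l : seq (nat * rat)) : set X :=
  [set z | exists2 e, e \in l & nth set0 us e.1 z /\ f z < rr e.2].

Definition DOK (t : R) (d : data) : Prop :=
  [/\ forall e, e \in d.1 -> rr e.2 < 0 /\ exists2 U, Us U & Wset e.1 `<=` U,
      uniq [seq Wset e.1 | e <- d.1],
      forall e, e \in d.2 -> (e.1 < size us)%N /\ 0 <= rr e.2
    & \sum_(e <- d.1) rr e.2 + \sum_(e <- d.2) rr e.2 < t].

Definition XOK (d : data) (x : X) : Prop :=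
  (forall e, e \in d.1 -> (G x `&` (Wset e.1 `&` setT) !=set0) /\
      ~ (G x `&` (Wset e.1 `&` [set z | rr e.2 <= f z]) !=set0)) /\
  ~ (G x `&` (setT `&` ([set z | 0 <= f z] `&` ~` PosCov d.2)) !=set0).

Definition E (t : R) (d : data) : set X := [set x | DOK t d /\ XOK d x].

Lemma nth_us_open k : open (nth set0 us k).
Proof.
case: (ltnP k (size us)) => hk; last by rewrite nth_default //; exact: open0.
by apply: Usopen; rewrite usE /=; exact: mem_nth.
Qed.

Lemma closed_fge c : closed [set z | c <= f z].
Proof.
have -> : [set z | c <= f z] = f @^-1` [set y | c <= y] by [].
by move: fcont => /continuous_closedP; apply; exact: closed_ge.
Qed.

Lemma open_flt c : open [set z | f z < c].
Proof.
have -> : [set z | f z < c] = f @^-1` [set y | y < c] by [].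
by apply: open_comp => // z _; exact: fcont.
Qed.

Lemma PosCov_open l : open (PosCov l).
Proof.
have -> : PosCov l = \bigcup_(e in [set e | e \in l]) (nth set0 us e.1 `&` [set z | f z < rr e.2]).
  by apply/seteqP; split => z [e el h]; exists e.
apply: bigcup_open => e _; apply: openI; [exact: nth_us_open | exact: open_flt].
Qed.

Lemma E_Borel t d : Borel (E t d).
Proof.
case: (pselect (DOK t d)) => hd; last first.
  rewrite (_ : E t d = set0); first exact: Borel0.
  by apply/seteqP; split => // x [].
have -> : E t d =
  [set x | forall e, e \in d.1 -> ([set x | G x `&` (Wset e.1 `&` setT) !=set0] `&`
      ~` [set x | G x `&` (Wset e.1 `&` [set z | rr e.2 <= f z]) !=set0]) x] `&`
  ~` [set x | G x `&` (setT `&` ([set z | 0 <= f z] `&` ~` PosCov d.2)) !=set0].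
  apply/seteqP; split => x.
    by move=> [_ [h1 h2]]; split => // e ed; have [] := h1 e ed.
  by move=> [h1 h2]; split => //; split => // e ed; have [] := h1 e ed.
apply: BorelI.
  apply: Borel_all => e _; apply: BorelI; last apply: BorelC.
    by apply: (@hit_Borel _ _ _ Gmeas); [exact: Wset_open | exact: closedT].
  by apply: (@hit_Borel _ _ _ Gmeas); [exact: Wset_open | exact: closed_fge].
apply: BorelC; apply: (@hit_Borel _ _ _ Gmeas); first exact: openT.
by apply: closedI; [exact: closed_fge | apply: open_closedC; exact: PosCov_open].
Qed.


Lemma sound t d x : E t d x -> (Fmap G f Us x < t%:E)%E.
Proof.
move=> [[negD uniqW posP sumlt] [hneg hpos]].
pose wl := [seq Wset e.1 | e <- d.1].
pose pl := [seq (G x `&` nth set0 us e.1 `&` [set z | f z < rr e.2]) | e <- d.2].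
pose fl := [seq (U `\` (G x `&` [set z | 0 <= f z])) | U <- us].
pose bl := pl ++ fl.
pose S := [set` (bl ++ wl)].
have Scov : borel_finite_cover S.
  split; [exact: finite_seq | split].
  - move=> V; rewrite /S /bl /= !mem_cat => /orP[/orP[]|].
    + move=> /mapP [e _ ->]; apply: BorelI; last by apply: Borel_open; exact: open_flt.
      by apply: BorelI; [exact: Borel_closed | apply: Borel_open; exact: nth_us_open].
    + move=> /mapP [U Uus ->]; rewrite setDE; apply: BorelI.
        by apply: Borel_open; apply: Usopen; rewrite usE.
      by apply: BorelC; apply: Borel_closed; apply: closedI; [exact: Gclosed | exact: closed_fge].
    + by move=> /mapP [e _ ->]; apply: Borel_open; exact: Wset_open.
  - apply/seteqP; split => // z _.
    case: (pselect (G x z /\ 0 <= f z)) => [[Gz fz]|nz].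
    + have : PosCov d.2 z.
        by apply: contrapT => nP; apply: hpos; exists z; do !split.
      move=> [e ed [Uz fze]].
      exists (G x `&` nth set0 us e.1 `&` [set z | f z < rr e.2]) => //.
      by rewrite /S /bl /= !mem_cat; apply/orP; left; apply/orP; left; exact: map_f.
    + have : (\bigcup_(U in Us) U) z by rewrite Uscover.
      move=> [U UsU Uz]; exists (U `\` (G x `&` [set z | 0 <= f z])).
        rewrite /S /bl /= !mem_cat; apply/orP; left; apply/orP; right.
        by apply: map_f; move: UsU; rewrite usE.
      by split => // -[].
have Sref : refines S Us.
  move=> V; rewrite /S /bl /= !mem_cat => /orP[/orP[]|].
  - move=> /mapP [e ed ->]; exists (nth set0 us e.1); last by move=> z [[]].
    by rewrite usE /=; apply: mem_nth; exact: (posP e ed).1.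
  - by move=> /mapP [U Uus ->]; exists U; [rewrite usE | move=> z []].
  - by move=> /mapP [e ed ->]; have [_ [U UsU sub]] := negD e ed; exists U.
have sumS : (\sum_(V \in S) term V x <=
    (\sum_(e <- d.1) rr e.2 + \sum_(e <- d.2) rr e.2)%:E)%E.
  have -> : S = [set` undup (bl ++ wl)].
    by apply/seteqP; split => V /=; rewrite mem_undup.
  rewrite -fsbig_seq ?undup_uniq //.
  under eq_bigr do rewrite term_fin.
  rewrite sumEFin lee_fin undup_cat big_cat /= (@undup_id _ wl uniqW).
  rewrite addrC; apply: lerD.
  - rewrite /wl big_map !big_seq; apply: ler_sum => e ed; have [ne nhit] := hneg e ed.
    apply: term_le.
      move=> y Wy Gy; rewrite leNgt; apply/negP => lt; apply: nhit.
      by exists y; split => //; split => //; rewrite /= ltW.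
    move=> e0; exfalso; move: ne => [y [Gy [Wy _]]].
    by have : (Wset e.1 `&` G x) y by []; rewrite e0.
  - apply: (@le_trans _ _ (\sum_(V <- [seq V <- undup bl | V \notin wl]) Num.max (termR V x) 0)).
      by apply: ler_sum => V _; rewrite le_max lexx.
    have hg : forall V, 0 <= Num.max (termR V x) 0 by move=> V; rewrite le_max lexx orbT.
    rewrite big_filter; apply: (le_trans (sum_filter_le _ _ _ hg)).
    apply: (le_trans (sum_undup_le _ _ hg)).
    rewrite big_cat /= -[X in _ <= X]addr0; apply: lerD.
      rewrite big_map !big_seq; apply: ler_sum => e ed; rewrite ge_max (posP e ed).2 andbT.
      apply: term_le; last by move=> _; exact: (posP e ed).2.
      by move=> y [[Gy Uy] fy] _; exact: ltW.
    rewrite big_map big1 // => U _; apply/eqP; rewrite eq_le le_max lexx orbT andbT.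
    rewrite ge_max lexx andbT; apply: term_le => //.
    move=> y [Uy nGy] Gy; rewrite leNgt; apply/negP => fy.
    by apply: nGy; split => //; rewrite /= ltW.
apply: (@le_lt_trans _ _ (\sum_(V \in S) term V x)%E).
  by apply: ereal_inf_lbound; exists S.
by apply: (le_lt_trans sumS); rewrite lte_fin.
Qed.


Lemma complete t x : (Fmap G f Us x < t%:E)%E -> exists d, E t d x.
Proof.
move=> /ereal_inf_lt [_ [Vs [[Vsfin [VsB Vscov]] Vsref] <-] sumlt].
have [s0 Vse] := (finite_seqP Vs).1 Vsfin.
pose vs := undup s0.
have Vsvs : Vs = [set` vs].
  by rewrite Vse; apply/seteqP; split=> V /=; rewrite mem_undup.
have uvs : uniq vs := undup_uniq s0.
have tf : forall V, sup_term f (G x) V = (termR V x)%:E := fun V => term_fin V x.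
have sumR : \sum_(V <- vs) termR V x < t.
  move: sumlt; rewrite Vsvs -fsbig_seq //.
  by under eq_bigr do rewrite tf; rewrite sumEFin lte_fin.
have vcov : forall z, exists2 V, V \in vs & V z.
  move=> z; have : (\bigcup_(V in Vs) V) z by rewrite Vscov.
  by move=> [V]; rewrite Vsvs => Vv Vz; exists V.
have vref : forall V, V \in vs -> exists2 U, U \in us & V `<=` U.
  move=> V Vv; have [U UsU sub] : exists2 U, Us U & V `<=` U.
    by apply: Vsref; rewrite Vsvs.
  by exists U => //; move: UsU; rewrite usE.
pose neg V := termR V x < 0.
pose S := \sum_(V <- vs) termR V x.
pose eta := (t - S) / (size vs).+1%:R.
have eta0 : 0 < eta by rewrite /eta divr_gt0 // subr_gt0.
pose bnd V := if neg V then Num.min (termR V x + eta) 0 else termR V x + eta.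
have qex : forall V, exists q : rat, termR V x < rr q < bnd V.
  move=> V; apply: rat_between; rewrite /bnd; case: ifP => hn.
    by rewrite lt_min ltrDl eta0; exact: hn.
  by rewrite ltrDl.
pose q V := xchoose (qex V).
have qP : forall V, termR V x < rr (q V) < bnd V := fun V => xchooseP (qex V).
have [Uof hUof] : {Uof : set X -> set X & forall V, V \in vs -> Uof V \in us /\ V `<=` Uof V}.
  apply: (@choice _ _ (fun V U => V \in vs -> U \in us /\ V `<=` U)) => V.
  case: (boolP (V \in vs)) => Vv.
    by have [U Uu sub] := vref V Vv; exists U.
  by exists set0 => h; exfalso; move/negP: Vv; apply.
have [y hy] : {y : set X -> X & forall V, neg V -> V (y V) /\ G x (y V)}.
  apply: (@choice _ _ (fun V z => neg V -> V z /\ G x z)) => V.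
  case: (boolP (neg V)) => hn.
    by have [z zz] := termN0 _ _ hn; exists z.
  by exists x0 => h; exfalso; move/negP: hn; apply.
have [pt hpt] : {pt : set X * set X -> X & forall VV, VV.1 != VV.2 ->
    (VV.1 (pt VV) /\ ~ VV.2 (pt VV)) \/ (~ VV.1 (pt VV) /\ VV.2 (pt VV))}.
  apply: (@choice _ _ (fun VV p => VV.1 != VV.2 ->
    (VV.1 p /\ ~ VV.2 p) \/ (~ VV.1 p /\ VV.2 p))) => -[V V'] /=.
  case: (pselect (V = V')) => [->|nVV]; first by exists x0; rewrite eqxx.
  apply: contrapT => H; apply: nVV; apply/seteqP; split => p Vp.
    by apply: contrapT => nV'p; apply: H; exists p => _; left.
  by apply: contrapT => nVp; apply: H; exists p => _; right.
pose negvs := [seq V <- vs | neg V].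
have negvsP : forall V, V \in negvs -> V \in vs /\ neg V.
  by move=> V; rewrite mem_filter => /andP[].
pose Q := [seq y V | V <- negvs] ++ [seq pt (V, V') | V <- negvs, V' <- negvs].
pose Pq (p : X) (e : R) :=
  (forall p', p' \in Q -> p != p' -> ball p e `&` ball p' e = set0) /\
  (forall V, V \in negvs -> V p -> ball p e `<=` Uof V /\
      (G x p -> ball p e `<=` [set z | f z < rr (q V)])) /\
  (~ G x p -> ball p e `&` G x = set0).
have [eps eps0 heps] : exists2 e, 0 < e & forall e', 0 < e' <= e -> forall p, p \in Q -> Pq p e'.
  apply: small_all => p pQ; apply: small_and; [|apply: small_and].
  - apply: (@small_all _ _ Q (fun p' e => p != p' -> ball p e `&` ball p' e = set0)).
    move=> p' _; case: (eqVneq p p') => [<-|npp']; first by exists 1.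
    have := Xhaus; rewrite ball_hausdorff => /(_ p p' npp') [[r1 r2] /= /eqP h].
    exists (Num.min r1%:num r2%:num); first by rewrite lt_min !gt0.
    move=> e' /andP[e'0 e'le] _; apply/seteqP; split => // z [bz bz'].
    have : (ball p r1%:num `&` ball p' r2%:num) z.
      split; [apply: (le_ball _ bz) | apply: (le_ball _ bz')];
        by apply: (le_trans e'le); rewrite ge_min lexx ?orbT.
    by rewrite h.
  - apply: (@small_all _ _ negvs (fun V e => V p -> ball p e `<=` Uof V /\
      (G x p -> ball p e `<=` [set z | f z < rr (q V)]))).
    move=> V Vn; have [Vv nV] := negvsP V Vn.
    case: (pselect (V p)) => Vp; last by exists 1.
    have oU : open (Uof V) by apply: Usopen; rewrite usE; exact: (hUof V Vv).1.
    have Up : Uof V p by apply: (hUof V Vv).2.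
    have h1 := nbhs_small _ _ oU Up.
    have [e2 e20 h2] : exists2 e, 0 < e & forall e', 0 < e' <= e ->
        G x p -> ball p e' `<=` [set z | f z < rr (q V)].
      case: (pselect (G x p)) => Gp; last by exists 1.
      have fp : f p < rr (q V).
        by apply: (le_lt_trans (term_ge _ _ _ Vp Gp)); have /andP[] := qP V.
      have [e2 e20 h2] := nbhs_small _ _ (open_flt (rr (q V))) fp.
      by exists e2 => // e' he' _; exact: h2.
    have [e e0 h] := small_and _ _ h1 (ex_intro2 _ _ e2 e20 h2).
    by exists e => // e' he' _; exact: h.
  - case: (pselect (G x p)) => Gp; first by exists 1.
    have oC : open (~` G x) by apply: closed_openC.
    have [e e0 h] := nbhs_small _ _ oC Gp.
    exists e => // e' he' _; apply/seteqP; split => // z [bz Gz].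
    by have := h e' he' z bz.
have Peps : forall p, p \in Q -> Pq p eps.
  by move=> p pQ; apply: heps => //; rewrite eps0 lexx.
have [bidx hbidx] : {bidx : X -> nat * nat & forall p, basic (bidx p) p /\ basic (bidx p) `<=` ball p eps}.
  apply: (@choice _ _ (fun p b => basic b p /\ basic b `<=` ball p eps)) => p.
  exact: basic_small.
pose ws V := [seq bidx p | p <- Q & `[< V p >]].
have Wchar : forall V z, Wset (ws V) z -> exists2 p, (p \in Q) /\ V p & ball p eps z.
  move=> V z [b /mapP [p]]; rewrite mem_filter => /andP[/asboolP Vp pQ] -> bz.
  by exists p => //; exact: (hbidx p).2.
have Wself : forall V p, p \in Q -> V p -> Wset (ws V) p.
  move=> V p pQ Vp; exists (bidx p); last exact: (hbidx p).1.
  by apply: map_f; rewrite mem_filter pQ andbT; apply/asboolP.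
pose d : data := ([seq (ws V, q V) | V <- negvs],
                  [seq (index (Uof V) us, q V) | V <- vs & ~~ neg V]).
have negvs_neg : forall V, V \in negvs -> rr (q V) < 0.
  move=> V /negvsP [_ nV]; have /andP[_] := qP V; rewrite /bnd nV => h.
  by apply: (lt_le_trans h); rewrite ge_min lexx orbT.
have nneg_pos : forall V, ~~ neg V -> 0 <= rr (q V).
  move=> V nV; have /andP[h _] := qP V; apply: ltW; apply: le_lt_trans h.
  by rewrite leNgt.
have sep : forall A B p, p \in Q -> A p -> ~ B p -> Wset (ws A) <> Wset (ws B).
  move=> A B p pQ Ap nBp eqW.
  have : Wset (ws B) p by rewrite -eqW; exact: Wself.
  move=> /Wchar [p' [p'Q Bp'] bp'p].
  have npp' : p != p' by apply/eqP => epp; apply: nBp; rewrite epp.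
  have := (Peps p pQ).1 p' p'Q npp'.
  move=> /seteqP [+ _] => /(_ p); apply; split; last exact: bp'p.
  exact: ballxx.
exists d; split; [split|split].
- move=> e /mapP [V Vn ->] /=; split; first exact: negvs_neg.
  have [Vv _] := negvsP V Vn.
  exists (Uof V); first by rewrite usE; exact: (hUof V Vv).1.
  move=> z /Wchar [p [pQ Vp] bpz].
  by have [+ _] := (Peps p pQ).2.1 V Vn Vp; apply.
- rewrite -map_comp map_inj_in_uniq; first by apply: filter_uniq.
  move=> V V' Vn V'n /= eqW; apply/eqP; apply: contraT => nVV'.
  have pQ : pt (V, V') \in Q.
    rewrite mem_cat; apply/orP; right.
    exact: (@allpairs_f _ _ _ (fun A B => pt (A, B))).
  suff : False by [].
  have [[h1 h2]|[h1 h2]] := hpt (V, V') nVV'.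
    exact: (sep V V' _ pQ h1 h2 eqW).
  exact: (sep V' V _ pQ h2 h1 (esym eqW)).
- move=> e /mapP [V]; rewrite mem_filter => /andP[nV Vv] -> /=; split.
    by rewrite index_mem; exact: (hUof V Vv).1.
  exact: nneg_pos.
- rewrite !big_map big_filter big_filter.
  have -> : \sum_(V <- vs | neg V) rr (q V) + \sum_(V <- vs | ~~ neg V) rr (q V) =
      \sum_(V <- vs) rr (q V) by rewrite [RHS](bigID neg).
  have hle : \sum_(V <- vs) rr (q V) <= \sum_(V <- vs) (termR V x + eta).
    apply: ler_sum => V _; have /andP[_ h] := qP V; apply/ltW/(lt_le_trans h).
    by rewrite /bnd; case: ifP => _; rewrite ?ge_min lexx.
  apply: (le_lt_trans hle); rewrite big_split /= big_const_seq count_predT iter_addr_0.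
  rewrite -/S -mulr_natr.
  have heta : eta * (size vs)%:R + eta = t - S.
    by rewrite /eta -{2}(mulr1 ((t - S) / _)) -mulrDr -natr1 divfK // pnatr_eq0.
  lra.
- move=> e /mapP [V Vn ->] /=; have [Vv nV] := negvsP V Vn; split.
    have [yV GyV] := hy V nV.
    have yQ : y V \in Q by rewrite mem_cat; apply/orP; left; exact: map_f.
    by exists (y V); split => //; split => //; exact: Wself.
  move=> [z [Gz [/Wchar [p [pQ Vp] bpz] /= fz]]].
  have [_ [hV hG]] := Peps p pQ.
  case: (pselect (G x p)) => Gp.
    have /= := (hV V Vn Vp).2 Gp z bpz.
    by rewrite ltNge fz.
  have := hG Gp; move=> /seteqP [+ _] => /(_ z); apply; by split.
- move=> [z [Gz [_ [/= fz nP]]]]; apply: nP.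
  have [V Vv Vz] := vcov z.
  have tV : f z <= termR V x := term_ge _ _ _ Vz Gz.
  have nV : ~~ neg V by rewrite /neg -leNgt; exact: le_trans tV.
  exists (index (Uof V) us, q V).
    by apply: map_f; rewrite mem_filter nV.
  rewrite /= nth_index; last exact: (hUof V Vv).1.
  split; first exact: (hUof V Vv).2.
  by apply: (le_lt_trans tV); have /andP[] := qP V.
Qed.

Lemma level_Borel t : Borel [set x | (Fmap G f Us x < t%:E)%E].
Proof.
have -> : [set x | (Fmap G f Us x < t%:E)%E] = \bigcup_(d : data) E t d.
  apply/seteqP; split => x.
    by move=> /complete [d hd]; exists d.
  by move=> [d _ hd]; exact: (sound _ _ _ hd).
by apply: Borel_bigcup_count => d; exact: E_Borel.
Qed.
End Main.


Theorem lemma4p1 (R : realType) (X : pseudoMetricType R)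
  (Xhaus : hausdorff_space X) (Xcompact : compact [set: X])
  (G : X -> set X)
  (Gne : forall x, G x !=set0) (Gclosed : forall x, closed (G x))
  (Gmeas : measurable_setmap G)
  (f : X -> R) (fcont : continuous f)
  (Us : set (set X)) (Usfin : finite_set Us) (Usopen : forall U, Us U -> open U)
  (Uscover : \bigcup_(U in Us) U = setT) :
  forall B : set (\bar R), measurable B -> Borel (Fmap G f Us @^-1` B).
Proof.
move=> B mB.
case: (pselect (exists z : X, True)) => [[x0 _]|nX]; last first.
  rewrite (_ : _ @^-1` B = set0); first exact: Borel0.
  by apply/seteqP; split => // z; exfalso; apply: nX; exists z.
have [us usE] := (finite_seqP Us).1 Usfin.
have [net netP] : {net : nat -> seq X &
    forall n z, exists2 c, c \in net n & ball c (n.+1%:R^-1 / 2) z}.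
  apply: (@choice _ _ (fun n s => forall z, exists2 c, c \in s & ball c (n.+1%:R^-1 / 2) z)).
  move=> n; apply: nets_exist => //.
have [M fM] := cont_bounded _ _ _ fcont Xcompact.
apply: Borel_ereal => // t.
exact: (@level_Borel R X Xhaus G Gclosed Gmeas f fcont Us Usopen Uscover us usE x0 net netP M fM t).
Qed.
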